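(* Let $q$ be odd, $q\not\equiv0\pmod 3$. Then the point $\mathbf P(1,0,1,0)$ is a $1_\Gamma$-point if $q\equiv-1\pmod3$ and a $3_\Gamma$-point if $q\equiv1\pmod3$.
   Context: In $\mathrm{PG}(3,q)$ with points $\mathbf P(x_0,x_1,x_2,x_3)$, the twisted cubic is $\mathcal C=\{\mathbf P(t^3,t^2,t,1):t\in\mathbb F_q\}\cup\{\mathbf P(1,0,0,0)\}$. Its osculating planes ($\Gamma$-planes) are $x_0-3tx_1+3t^2x_2-t^3x_3=0$ for $t\in\mathbb F_q$ and $x_3=0$. A $\mu_\Gamma$-point ($\mu\in\{1,3\}$) is a point off $\mathcal C$ lying in exactly $\mu$ distinct $\Gamma$-planes. *)

(* Defs.v *)
From HB Require Import structures.
From mathcomp Require Import all_boot all_order all_algebra all_field.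
Set Implicit Arguments. Unset Strict Implicit. Unset Printing Implicit Defensive.
Import GRing.Theory.
Local Open Scope ring_scope.

(* Homogeneous coordinates (x0,x1,x2,x3) of PG(3,q) over a finite field F. *)
Definition vec4 (F : finFieldType) := (F * F * F * F)%type.

Definition mkv (F : finFieldType) (a b c d : F) : vec4 F := (a, b, c, d).

Definition zerov (F : finFieldType) : vec4 F := mkv 0 0 0 0.

Definition scalev (F : finFieldType) (c : F) (v : vec4 F) : vec4 F :=
  let: (a, b, e, d) := v in mkv (c * a) (c * b) (c * e) (c * d).

Definition dot4 (F : finFieldType) (u v : vec4 F) : F :=
  let: (a0, a1, a2, a3) := u in let: (b0, b1, b2, b3) := v in
  a0 * b0 + a1 * b1 + a2 * b2 + a3 * b3.

Definition same_point (F : finFieldType) (x v : vec4 F) : Prop :=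
  exists c : F, c != 0 /\ x = scalev c v.

Definition on_cubic (F : finFieldType) (x : vec4 F) : Prop :=
  (exists t : F, same_point x (mkv (t ^+ 3) (t ^+ 2) t 1))
  \/ same_point x (mkv 1 0 0 0).

(* Coordinates of the osculating (Gamma-)planes:
   Some t  ~ x0 - 3t x1 + 3t^2 x2 - t^3 x3 = 0,   None ~ x3 = 0. *)
Definition gamma_coef (F : finFieldType) (o : option F) : vec4 F :=
  match o with
  | Some t => mkv 1 (- (3%:R * t)) (3%:R * t ^+ 2) (- t ^+ 3)
  | None => mkv 0 0 0 1
  end.

(* A plane of PG(3,q), identified with its set of (nonzero) coordinate
   vectors, so that equal sets = equal planes. *)
Definition plane_pts (F : finFieldType) (u : vec4 F) : {set vec4 F} :=
  [set x : vec4 F | (x != zerov F) && (dot4 u x == 0)].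

Definition gamma_planes_through (F : finFieldType) (x : vec4 F)
  : {set {set vec4 F}} :=
  [set plane_pts (gamma_coef o) | o in [pred o : option F | dot4 (gamma_coef o) x == 0]].

Definition mu_Gamma_point (F : finFieldType) (mu : nat) (x : vec4 F) : Prop :=
  ~ on_cubic x /\ #|gamma_planes_through x| = mu.

(* Main.v *)
Require Import Defs.
From HB Require Import structures.
From mathcomp Require Import all_boot all_order all_fingroup all_solvable.
From mathcomp Require Import all_algebra all_field.
From mathcomp Require Import zify ring.
Import GRing.Theory FinRing.Theory.
Local Open Scope ring_scope.
Set Implicit Arguments.

Definition pt {F : finFieldType} (o : option F) : vec4 F :=
  match o with Some t => mkv (t ^+ 3) (t ^+ 2) t 1 | None => mkv 1 0 0 0 end.

Lemma pt_in {F : finFieldType} (o : option F) : pt o \in plane_pts (gamma_coef o).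
Proof.
rewrite inE; apply/andP; split.
  by case: o => [t|]; rewrite /pt /zerov /mkv !xpair_eqE oner_eq0 ?andbF.
by case: o => [t|] /=; apply/eqP; ring.
Qed.

Lemma gam_inj (F : finFieldType) : injective (fun o : option F => plane_pts (gamma_coef o)).
Proof.
have key : forall o o' : option F, plane_pts (gamma_coef o) = plane_pts (gamma_coef o') ->
   dot4 (gamma_coef o') (pt o) = 0.
  by move=> o o' e; have := pt_in o; rewrite e inE => /andP[_ /eqP].
move=> o1 o2 /= e; have k := key _ _ e.
case: o1 o2 e k => [t|] [s|] //= e k.
- have : (t - s) ^+ 3 = 0 by rewrite -k; ring.
  by move/eqP; rewrite expf_eq0 /= subr_eq0 => /eqP ->.
- by move: k; rewrite !mul0r !add0r mul1r => /eqP; rewrite oner_eq0.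
- by move: k; rewrite !mulr0 !addr0 mulr1 => /eqP; rewrite oner_eq0.
Qed.
Lemma char_ne (F : finFieldType) p : prime p -> ~~ (p %| #|F|)%N -> p%:R != 0 :> F.
Proof.
move=> pr ndv; apply/negP => /eqP h.
have pc : p \in [pchar F] by rewrite inE pr h eqxx.
have := abelem_pgroup (fin_ring_pchar_abelem pc).
rewrite /pgroup cardsT => /p_natP [k hk].
move: ndv; rewrite hk; case: k hk => [|k] hk.
  by have := finNzRing_gt1 F; rewrite hk.
by rewrite expnS dvdn_mulr.
Qed.

Lemma cube_root (F : finFieldType) : (#|F| %% 3 = 1)%N ->
  exists w : F, (w ^+ 2 + w + 1 = 0).
Proof.
move=> h.
have d : (3 %| #|[set: {unit F}]|)%N.
  rewrite card_finField_unit.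
  have g := finNzRing_gt1 F. lia.
have [x _ ox] := Cauchy (isT : prime 3) d.
exists (val x).
have x3 : val x ^+ 3 = 1 by rewrite -val_unitX -ox expg_order.
have x1 : val x - 1 != 0.
  rewrite subr_eq0; apply/eqP => e. have : x = 1%g by apply: val_inj; rewrite e.
  by move=> ex; move: ox; rewrite ex order1.
apply: (mulfI x1); rewrite mulr0.
have -> : (val x - 1) * (val x ^+ 2 + val x + 1) = val x ^+ 3 - 1 by ring.
by rewrite x3 subrr.
Qed.

Lemma dotx {F : finFieldType} (o : option F) :
  dot4 (gamma_coef o) (mkv 1 0 1 0) = if o is Some t then 1 + 3%:R * t ^+ 2 else 0.
Proof. by case: o => [t|] /=; ring. Qed.

Lemma not_cubic (F : finFieldType) : ~ on_cubic (mkv (1 : F) 0 1 0).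
Proof.
case=> [[t [c [c0 e]]] | [c [c0 e]]]; move: e; rewrite /scalev /mkv; case.
- by move=> _ _ _ /eqP; rewrite mulr1 eq_sym (negbTE c0).
- by move=> _ _ /eqP; rewrite mulr0 oner_eq0.
Qed.

Theorem lemma5p1 (F : finFieldType) :
  odd #|F| -> (#|F| %% 3 != 0)%N ->
  ((#|F| %% 3 = 2)%N -> mu_Gamma_point 1 (mkv (1 : F) 0 1 0)) /\
  ((#|F| %% 3 = 1)%N -> mu_Gamma_point 3 (mkv (1 : F) 0 1 0)).
Proof.
move=> oddF m3.
have two0 : 2%:R != 0 :> F by apply: char_ne => //; rewrite dvdn2 oddF.
have three0 : 3%:R != 0 :> F by apply: char_ne => //; rewrite /dvdn.
have cardE : forall mu, #|[pred o : option F | dot4 (gamma_coef o) (mkv 1 0 1 0) == 0]| = mu ->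
    mu_Gamma_point mu (mkv (1 : F) 0 1 0).
  move=> mu h; split; first exact: not_cubic.
  by rewrite /gamma_planes_through card_imset //; apply: gam_inj.
split=> hq; apply: cardE.
- rewrite -(cards1 (None : option F)); apply: eq_card => o.
  rewrite !inE /=; case: o => [t|]; rewrite dotx ?eqxx //=.
  apply/negP => /eqP ht.
  have ht' : 3%:R * t ^+ 2 = -1 :> F.
    by apply/eqP; rewrite -subr_eq0 opprK addrC ht.
  pose w := (3%:R * t - 1) / 2%:R.
  have hw : w ^+ 2 + w + 1 = 0.
    have -> : w ^+ 2 + w + 1 = 3%:R * (1 + 3%:R * t ^+ 2) / 4%:R.
      rewrite /w; field.
      have h4 : 4%:R = 2%:R * 2%:R :> F by rewrite -natrM.
      by rewrite h4 mulf_neq0 ?two0.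
    by rewrite ht mulr0 mul0r.
  have w3 : w ^+ 3 = 1.
    apply/eqP; rewrite -subr_eq0.
    have -> : w ^+ 3 - 1 = (w - 1) * (w ^+ 2 + w + 1) by ring.
    by rewrite hw mulr0.
  have wq := expf_card w.
  rewrite (divn_eq #|F| 3) hq exprD mulnC exprM w3 expr1n mul1r in wq.
  have : w * (w - 1) = 0 by rewrite mulrBr mulr1 -expr2 wq subrr.
  move/eqP; rewrite mulf_eq0 subr_eq0 => /orP[] /eqP w0.
    by move: hw; rewrite w0 expr0n /= !add0r => /eqP; rewrite oner_eq0.
  by move: hw; rewrite w0 expr1n => /eqP; rewrite -(natrD _ 1 1) -(natrD _ 2 1) (negbTE three0).
- have [w hw] := cube_root F hq.
  pose t0 := (2%:R * w + 1) / 3%:R.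
  have ht0 : 3%:R * t0 ^+ 2 = -1 :> F.
    have -> : 3%:R * t0 ^+ 2 = (4%:R * (w ^+ 2 + w + 1) - 3%:R) / 3%:R.
      by rewrite /t0; field.
    by rewrite hw mulr0 sub0r mulNr divff.
  have t00 : t0 != 0.
    apply/eqP => e; move: ht0; rewrite e expr0n mulr0 => /eqP.
    by rewrite eq_sym oppr_eq0 oner_eq0.
  have tt : t0 != - t0.
    apply/eqP => e.
    have : 2%:R * t0 == 0 by rewrite mulr_natl mulr2n {2}e subrr.
    by rewrite mulf_eq0 (negbTE two0) (negbTE t00).
  rewrite -(_ : #|[set None; Some t0; Some (- t0)]| = 3%N).
    apply: eq_card => o; rewrite !inE /=.
    case: o => [t|]; rewrite dotx ?eqxx //=.
    have -> : (1 + 3%:R * t ^+ 2 == 0) = ((t - t0) * (t + t0) == 0).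
      have -> : 1 + 3%:R * t ^+ 2 = 3%:R * ((t - t0) * (t + t0)).
        apply/eqP; rewrite -subr_eq0.
        have -> : 1 + 3%:R * t ^+ 2 - 3%:R * ((t - t0) * (t + t0)) = 1 + 3%:R * t0 ^+ 2 by ring.
        by rewrite ht0 subrr.
      by rewrite mulf_eq0 (negbTE three0).
    by rewrite mulf_eq0 subr_eq0 addr_eq0.
  by rewrite -setUA cardsU1 cards2 !inE /= (inj_eq (@Some_inj _)) tt.
Qed.
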